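(* Let $m$ be an integer with $3\le m\le 6$. Then for every integer $n\ge m-1$, $$F_{n+2,2}\equiv F_{n,2}\pmod{2^m},$$ i.e. from the term of index $m-1$ onward the sequence $(F_{n,2}\bmod 2^m)_{n\ge0}$ is periodic with period $2$.
   Context: For positive integers $r\le m\le n$, $S_r(n,m)$ denotes the $r$-Stirling number of the second kind: the number of partitions of $\{1,\dots,n\}$ into $m$ non-empty blocks such that $1,\dots,r$ lie in pairwise distinct blocks. For a positive integer $r$ and integer $n\ge 0$, the $r$-Fubini number is $F_{n,r}=\sum_{k=0}^{n}(k+r)!\,S_r(n+r,k+r)$. *)

(* Defs.v *)
From mathcomp Require Import all_boot.
Set Implicit Arguments. Unset Strict Implicit. Unset Printing Implicit Defensive.

(* r-Stirling number of the second kind S_r(n,m): number of partitions of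
   {1,...,n} (modelled as 'I_n = {0,...,n-1}, element k+1 ~ ordinal k)
   into m non-empty blocks such that 1,...,r (ordinals of value < r)
   lie in pairwise distinct blocks. *)
Definition rstirling2 (r n m : nat) : nat :=
  #|[set P : {set {set 'I_n}} |
      [&& partition P [set: 'I_n], #|P| == m &
          [forall i : 'I_n, forall j : 'I_n,
             ((i < r) && (j < r) && (i != j)) ==> (pblock P i != pblock P j)]]]|.

Definition rfubini (n r : nat) : nat :=
  \sum_(0 <= k < n.+1) (k + r)`! * rstirling2 r (n + r) (k + r).

(* Main.v *)
Require Import Defs.
From mathcomp Require Import all_boot zify.
From Stdlib Require Import Lia.
Set Implicit Arguments. Unset Strict Implicit. Unset Printing Implicit Defensive.


Section PartChar.
Variable T : finType.
Lemma partT_P (P : {set {set T}}) :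
  partition P [set: T] <->
  [/\ set0 \notin P, (forall x, exists2 Y, Y \in P & x \in Y) &
      (forall X Y x, X \in P -> Y \in P -> x \in X -> x \in Y -> X = Y)].
Proof.
split.
- case/and3P => /eqP cov tri n0; split => //.
  + move=> x; have : x \in cover P by rewrite cov inE.
    by case/bigcupP => Y PY xY; exists Y.
  + move=> X Y x PX PY xX xY.
    by rewrite -(def_pblock tri PX xX) (def_pblock tri PY xY).
- case=> n0 cov tri; apply/and3P; split => //.
  + apply/eqP/setP => x; rewrite inE; have [Y PY xY] := cov x.
    by apply/bigcupP; exists Y.
  + apply/trivIsetP => X Y PX PY neq.
    rewrite -setI_eq0; apply/eqP/setP => x; rewrite !inE.
    apply/negP => /andP[xX xY]; move/eqP: neq; apply; exact: tri xX xY.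
Qed.
End PartChar.

Definition sep (T : finType) (c0 c1 : T) (P : {set {set T}}) :=
  [forall Y in P, ~~ ((c0 \in Y) && (c1 \in Y))].
Definition SS (T : finType) (c0 c1 : T) (k : nat) :=
  [set P : {set {set T}} | [&& partition P [set: T], #|P| == k & sep c0 c1 P]].

Lemma sepP (T : finType) (c0 c1 : T) (P : {set {set T}}) :
  reflect (forall Y, Y \in P -> c0 \in Y -> c1 \in Y -> False) (sep c0 c1 P).
Proof.
apply: (iffP forall_inP) => H Y PY.
- by move=> y0 y1; move: (H Y PY); rewrite y0 y1.
- by apply/negP => /andP[y0 y1]; exact: H PY y0 y1.
Qed.

Section Ext.
Variables (A B : finType) (h : A -> B) (z : B).
Hypothesis hinj : injective h.
Hypothesis hz : forall a, h a != z.
Hypothesis hsurj : forall b, b != z -> exists a, b = h a.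
Variables a0 a1 : A.

Definition emb (X : {set A}) : {set B} := h @: X.
Definition res (P : {set {set B}}) : {set {set A}} := [set h @^-1: (Y : {set B}) | Y in P] :\ set0.
Definition ext0 (Q : {set {set A}}) : {set {set B}} := [set z] |: [set emb X | X in Q].
Definition extB (Q : {set {set A}}) X : {set {set B}} :=
  (z |: emb X) |: [set emb Y | Y in Q :\ X].

Lemma embK X : h @^-1: emb X = X.
Proof. by apply/setP => a; rewrite inE /emb mem_imset. Qed.

Lemma emb_inj : injective emb.
Proof. exact: imset_inj. Qed.

Lemma z_notin_emb X : z \notin emb X.
Proof. by apply/imsetP => -[a _ /eqP]; rewrite eq_sym (negbTE (hz a)). Qed.

Lemma mem_emb X a : (h a \in emb X) = (a \in X).
Proof. by rewrite /emb mem_imset. Qed.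

Lemma emb_eq0 X : (emb X == set0) = (X == set0).
Proof. by rewrite /emb imset_eq0. Qed.

Lemma preimU1 (Y : {set B}) : h @^-1: (z |: Y) = h @^-1: Y.
Proof. by apply/setP => a; rewrite !inE (negbTE (hz a)). Qed.

Lemma preim1 : h @^-1: [set z] = set0.
Proof. by apply/setP => a; rewrite !inE (negbTE (hz a)). Qed.

Lemma blockE (Y : {set B}) : z \notin Y -> Y = emb (h @^-1: Y).
Proof.
move=> zY; apply/setP => b; case: (eqVneq b z) => [->|/hsurj[a ->]].
  by rewrite (negbTE zY) (negbTE (z_notin_emb _)).
by rewrite mem_emb inE.
Qed.

Lemma blockzE (Y : {set B}) : z \in Y -> Y = z |: emb (h @^-1: Y).
Proof.
move=> zY; apply/setP => b; rewrite inE; case: (eqVneq b z) => [->|/hsurj[a ->]].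
  by rewrite zY !inE eqxx.
by rewrite mem_emb !inE (negbTE (hz a)).
Qed.

Lemma memres P W : (W \in res P) = (W != set0) && [exists Y in P, W == h @^-1: Y].
Proof.
rewrite /res !inE. congr (_ && _); apply/imsetP/exists_inP.
  by case=> Y PY ->; exists Y.
by case=> Y PY /eqP ->; exists Y.
Qed.

Lemma card_ext0 (Q : {set {set A}}) : #|ext0 Q| = #|Q|.+1.
Proof.
rewrite /ext0 cardsU1 card_imset; last exact: emb_inj.
suff -> : [set z] \notin [set emb X | X in Q] by [].
apply/imsetP => -[X _ E]; move: (z_notin_emb X); by rewrite -E !inE eqxx.
Qed.

Lemma card_extB (Q : {set {set A}}) X : X \in Q -> #|extB Q X| = #|Q|.
Proof.
move=> QX; rewrite /extB cardsU1 card_imset; last exact: emb_inj.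
rewrite (cardsD1 X Q) QX.
suff -> : (z |: emb X) \notin [set emb Y | Y in Q :\ X] by [].
apply/imsetP => -[Y _ E]; move: (z_notin_emb Y); by rewrite -E !inE eqxx.
Qed.


Lemma SS_n0 (T : finType) (c0 c1 : T) k (Q : {set {set T}}) :
  Q \in SS c0 c1 k -> set0 \notin Q.
Proof. by rewrite inE => /and3P[/and3P[] _ _ ->]. Qed.

Lemma ext0_good k (Q : {set {set A}}) : Q \in SS a0 a1 k -> ext0 Q \in SS (h a0) (h a1) k.+1.
Proof.
rewrite !inE => /and3P[/partT_P[n0 cov tri] /eqP cQ /sepP sQ].
apply/and3P; split; last first.
- apply/sepP => Y; rewrite /ext0 !inE => /orP[/eqP->|/imsetP[X QX ->]].
    by rewrite inE => /eqP e; move: (hz a0); rewrite e eqxx.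
  by rewrite !mem_emb; exact: sQ QX.
- by rewrite card_ext0 cQ.
apply/partT_P; split.
- rewrite /ext0 !inE negb_or; apply/andP; split.
    by apply/eqP => E; move: (set11 z); rewrite -E inE.
  apply/imsetP => -[X QX E].
  have : emb X == set0 by rewrite -E.
  by rewrite emb_eq0 => /eqP X0; move: QX n0; rewrite X0 => ->.
- move=> b; case: (eqVneq b z) => [->|/hsurj[a ->]].
    by exists [set z]; rewrite /ext0 !inE eqxx.
  have [X QX aX] := cov a; exists (emb X); last by rewrite mem_emb.
  by rewrite /ext0 !inE imset_f ?orbT.
- move=> X Y b; rewrite /ext0 !inE => /orP[/eqP->|/imsetP[X' QX' ->]]
     /orP[/eqP->|/imsetP[Y' QY' ->]] //.
  + by rewrite inE => /eqP ->; rewrite (negbTE (z_notin_emb _)).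
  + by move=> + /[!inE] /eqP E; rewrite E (negbTE (z_notin_emb _)).
  + move=> /imsetP[a aX ->]; rewrite mem_emb => aY.
    by rewrite (tri _ _ _ QX' QY' aX aY).
Qed.

Lemma res_ext0 (Q : {set {set A}}) : set0 \notin Q -> res (ext0 Q) = Q.
Proof.
move=> n0; apply/setP => W; rewrite memres; apply/andP/idP.
- case=> W0 /exists_inP[Y]; rewrite /ext0 !inE => /orP[/eqP->|/imsetP[X QX ->]];
    rewrite ?preim1 ?embK => /eqP E.
    by rewrite E eqxx in W0.
  by rewrite E.
- move=> QW; split.
    by apply/negP => /eqP W0; move: n0; rewrite -W0 QW.
  apply/exists_inP; exists (emb W); last by rewrite embK.
  by rewrite /ext0 !inE imset_f ?orbT.
Qed.

Lemma res_part (P : {set {set B}}) : partition P [set: B] -> partition (res P) [set: A].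
Proof.
case/partT_P => n0 cov tri; apply/partT_P; split.
- by rewrite memres eqxx.
- move=> a; have [Y PY hY] := cov (h a); exists (h @^-1: Y); last by rewrite inE.
  rewrite memres; apply/andP; split; last by apply/exists_inP; exists Y.
  by apply/set0Pn; exists a; rewrite inE.
- move=> X Y a; rewrite !memres => /andP[_ /exists_inP[X' PX' /eqP->]]
     /andP[_ /exists_inP[Y' PY' /eqP->]]; rewrite !inE => aX aY.
  by rewrite (tri _ _ _ PX' PY' aX aY).
Qed.

Lemma res_sep (P : {set {set B}}) : sep (h a0) (h a1) P -> sep a0 a1 (res P).
Proof.
move/sepP => sP; apply/sepP => W; rewrite memres => /andP[_ /exists_inP[Y PY /eqP->]].
rewrite !inE; exact: sP PY.
Qed.

Lemma extB_good k (Q : {set {set A}}) X : Q \in SS a0 a1 k -> X \in Q ->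
  [/\ extB Q X \in SS (h a0) (h a1) k, [set z] \notin extB Q X,
      res (extB Q X) = Q & h @^-1: pblock (extB Q X) z = X].
Proof.
rewrite inE => /and3P[Qp /eqP cQ /sepP sQ] QX.
have [n0 cov tri] := (partT_P Q).1 Qp.
have X0 : X != set0 by apply/negP => /eqP X0; move: n0; rewrite -X0 QX.
have key : forall W b, W \in Q :\ X -> b \in z |: emb X -> b \in emb W -> False.
  move=> W b; rewrite in_setD1 => /andP[WX QW]; rewrite in_setU1 => /orP[/eqP->|].
    by rewrite (negbTE (z_notin_emb _)).
  case/imsetP => a aX ->; rewrite mem_emb => aW.
  by move/eqP: WX; apply; exact: tri QW QX aW aX.
have Pp : partition (extB Q X) [set: B].
  apply/partT_P; split.
  + rewrite /extB in_setU1 negb_or; apply/andP; split.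
      by apply/negP => /eqP E; move: (setU11 z (emb X)); rewrite -E inE.
    apply/imsetP => -[Y]; rewrite in_setD1 => /andP[_ QY] /esym/eqP.
    by rewrite emb_eq0 => /eqP Y0; move: n0; rewrite -Y0 QY.
  + move=> b; case: (eqVneq b z) => [->|/hsurj[a ->]].
      by exists (z |: emb X); rewrite /extB ?setU11.
    have [Y QY aY] := cov a; case: (eqVneq Y X) => [YX|YX].
      exists (z |: emb X); first by rewrite /extB setU11.
      by rewrite in_setU1 mem_emb -YX aY orbT.
    exists (emb Y); last by rewrite mem_emb.
    rewrite /extB in_setU1; apply/orP; right; apply/imsetP; exists Y => //.
    by rewrite in_setD1 YX QY.
  + move=> Y1 Y2 b; rewrite /extB !in_setU1 => /orP[/eqP->|/imsetP[W1 QW1 ->]]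
       /orP[/eqP->|/imsetP[W2 QW2 ->]] //.
    * by move=> bZ bW2; case: (key _ _ QW2 bZ bW2).
    * by move=> bW1 bZ; case: (key _ _ QW1 bZ bW1).
    * move=> /imsetP[a aW1 ->]; rewrite mem_emb => aW2.
      move: QW1 QW2; rewrite !in_setD1 => /andP[_ QW1] /andP[_ QW2].
      by rewrite (tri _ _ _ QW1 QW2 aW1 aW2).
have ZP : z |: emb X \in extB Q X by rewrite /extB setU11.
split.
- rewrite inE; apply/and3P; split => //; first by rewrite card_extB // cQ.
  apply/sepP => Y; rewrite /extB in_setU1 => /orP[/eqP->|/imsetP[W QW ->]].
    rewrite !in_setU1 (negbTE (hz a0)) (negbTE (hz a1)) !mem_emb /=.
    exact: sQ QX.
  rewrite !mem_emb; apply: sQ; by move: QW; rewrite in_setD1 => /andP[].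
- rewrite /extB in_setU1 negb_or; apply/andP; split.
    apply/negP => /eqP E; have /set0Pn[a aX] := X0.
    have : h a \in [set z] by rewrite E in_setU1 mem_emb aX orbT.
    by rewrite inE (negbTE (hz a)).
  by apply/imsetP => -[W _ E]; move: (z_notin_emb W); rewrite -E !inE eqxx.
- apply/setP => W; rewrite memres; apply/andP/idP.
  + case=> W0 /exists_inP[Y]; rewrite /extB in_setU1 => /orP[/eqP->|/imsetP[W' QW' ->]] /eqP->.
      by rewrite preimU1 embK.
    by rewrite embK; move: QW'; rewrite in_setD1 => /andP[].
  + move=> QW; split; first by apply/negP => /eqP W0; move: n0; rewrite -W0 QW.
    case: (eqVneq W X) => [->|WX].
      by apply/exists_inP; exists (z |: emb X); rewrite // preimU1 embK.
    apply/exists_inP; exists (emb W); last by rewrite embK.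
    rewrite /extB in_setU1; apply/orP; right; apply/imsetP; exists W => //.
    by rewrite in_setD1 WX QW.
- by rewrite (def_pblock (partition_trivIset Pp) ZP (setU11 _ _)) preimU1 embK.
Qed.

Lemma S0_char k (P : {set {set B}}) : P \in SS (h a0) (h a1) k.+1 -> [set z] \in P ->
  P = ext0 (res P) /\ res P \in SS a0 a1 k.
Proof.
rewrite inE => /and3P[Pp /eqP cP sP] zP.
have [n0 cov tri] := (partT_P P).1 Pp.
have E : P = ext0 (res P).
  apply/setP => Y; apply/idP/idP.
  - move=> PY; rewrite /ext0 in_setU1; case: (eqVneq Y [set z]) => [//|Yz] /=.
    have zY : z \notin Y.
      by apply: contra Yz => zY; apply/eqP; exact: tri PY zP zY (set11 z).
    apply/imsetP; exists (h @^-1: Y); last exact: blockE.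
    rewrite memres; apply/andP; split; last by apply/exists_inP; exists Y.
    by rewrite -emb_eq0 -blockE //; apply/negP => /eqP Y0; move: n0; rewrite -Y0 PY.
  - rewrite /ext0 in_setU1 => /orP[/eqP->//|/imsetP[W]].
    rewrite memres => /andP[W0 /exists_inP[Y' PY' /eqP WE]] ->.
    have zY' : z \notin Y'.
      apply/negP => zY'; have e := tri _ _ _ PY' zP zY' (set11 z).
      by move: W0; rewrite WE e preim1 eqxx.
    by rewrite WE -blockE.
split => //; rewrite inE; apply/and3P; split; [exact: res_part | | exact: res_sep].
by rewrite {1}E card_ext0 in cP; case: cP => ->.
Qed.

Lemma S1_char k (P : {set {set B}}) : P \in SS (h a0) (h a1) k -> [set z] \notin P ->
  [/\ h @^-1: pblock P z \in res P, P = extB (res P) (h @^-1: pblock P z)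
    & res P \in SS a0 a1 k].
Proof.
rewrite inE => /and3P[Pp /eqP cP sP] zP.
have [n0 cov tri] := (partT_P P).1 Pp.
have tP := partition_trivIset Pp.
have PYz : pblock P z \in P by apply: pblock_mem; rewrite (cover_partition Pp) inE.
have zYz : z \in pblock P z by rewrite mem_pblock (cover_partition Pp) inE.
have XP : h @^-1: pblock P z \in res P.
  rewrite memres; apply/andP; split; last by apply/exists_inP; exists (pblock P z).
  apply/negP => /eqP X0; apply: (negP zP).
  by have := blockzE zYz; rewrite X0 /emb imset0 setU0 => <-.
have E : P = extB (res P) (h @^-1: pblock P z).
  apply/setP => Y; apply/idP/idP.
  - move=> PY; rewrite /extB in_setU1.
    case: (boolP (z \in Y)) => zY.
      by apply/orP; left; rewrite -(blockzE zYz) (def_pblock tP PY zY).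
    apply/orP; right; apply/imsetP; exists (h @^-1: Y); last exact: blockE.
    rewrite in_setD1 memres; apply/and3P; split; last by apply/exists_inP; exists Y.
      apply/negP => /eqP e; move: XP; rewrite memres => /andP[/set0Pn[a aX] _].
      have aY : h a \in Y by move: aX; rewrite -e inE.
      move: aX; rewrite inE => aYz.
      by move: zY; rewrite (tri _ _ _ PY PYz aY aYz) zYz.
    by rewrite -emb_eq0 -blockE //; apply/negP => /eqP Y0; move: n0; rewrite -Y0 PY.
  - rewrite /extB in_setU1 => /orP[/eqP->|]; first by rewrite -(blockzE zYz).
    move=> /imsetP[W]; rewrite in_setD1 memres => /and3P[WX W0 /exists_inP[Y' PY' /eqP WE]] ->.
    have zY' : z \notin Y'.
      by apply/negP => zY'; move: WX; rewrite WE (def_pblock tP PY' zY') eqxx.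
    by rewrite WE -blockE.
split => //; rewrite inE; apply/and3P; split; [exact: res_part | | exact: res_sep].
by rewrite {1}E card_extB // in cP; rewrite cP.
Qed.

Theorem SS_rec k :
  #|SS (h a0) (h a1) k.+1| = #|SS a0 a1 k| + k.+1 * #|SS a0 a1 k.+1|.
Proof.
rewrite -(cardsID [set P : {set {set B}} | [set z] \in P] (SS (h a0) (h a1) k.+1)).
congr (_ + _).
- have -> : SS (h a0) (h a1) k.+1 :&: [set P : {set {set B}} | [set z] \in P] = ext0 @: SS a0 a1 k.
    apply/setP => P.
    have Hz : (P \in [set P : {set {set B}} | [set z] \in P]) = ([set z] \in P) by rewrite inE.
    rewrite in_setI Hz; apply/andP/imsetP.
    + by case=> PS zP; have [E R] := S0_char PS zP; exists (res P).
    + case=> Q QS ->; split; first exact: ext0_good.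
      by rewrite /ext0 setU11.
  apply: card_in_imset => Q1 Q2 Q1S Q2S E.
  by rewrite -(res_ext0 (SS_n0 Q1S)) E res_ext0 // (SS_n0 Q2S).
- pose Pr := [set p : {set {set A}} * {set A} | (p.1 \in SS a0 a1 k.+1) && (p.2 \in p.1)].
  have -> : SS (h a0) (h a1) k.+1 :\: [set P : {set {set B}} | [set z] \in P] =
            (fun p => extB p.1 p.2) @: Pr.
    apply/setP => P.
    have Hz : (P \in [set P : {set {set B}} | [set z] \in P]) = ([set z] \in P) by rewrite inE.
    rewrite in_setD Hz; apply/andP/imsetP.
    + case=> zP PS; have [XP E R] := S1_char PS zP.
      by exists (res P, h @^-1: pblock P z); rewrite // inE /= R XP.
    + case=> -[Q X]; rewrite inE /= => /andP[QS QX] ->.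
      by have [G1 G2 _ _] := extB_good QS QX; split.
  rewrite card_in_imset; last first.
    move=> [Q1 X1] [Q2 X2]; rewrite [_ \in Pr]inE [_ \in Pr]inE /= => /andP[Q1S Q1X] /andP[Q2S Q2X] E.
    have [_ _ R1 B1] := extB_good Q1S Q1X; have [_ _ R2 B2] := extB_good Q2S Q2X.
    by congr pair; [rewrite -R1 E R2 | rewrite -B1 E B2].
  rewrite -sum1_card (eq_bigl (fun p => (p.1 \in SS a0 a1 k.+1) && (p.2 \in p.1)));
    last by move=> p; rewrite inE.
  rewrite -(pair_big_dep (fun Q => Q \in SS a0 a1 k.+1) (fun Q X => X \in Q) (fun _ _ => 1)).
  rewrite (eq_bigr (fun _ => k.+1)); first by rewrite sum_nat_const mulnC.
  by move=> Q; rewrite sum1_card inE => /and3P[_ /eqP -> _].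
Qed.

End Ext.

Section Ord.
Variable N : nat.
Hypothesis hN : 1 < N.
Definition b0 : 'I_N := Ordinal (ltnW hN).
Definition b1 : 'I_N := Ordinal hN.

Lemma bridge k : rstirling2 2 N k = #|SS b0 b1 k|.
Proof.
rewrite /rstirling2; apply: eq_card => P; rewrite !inE.
case Pp : (partition P [set: 'I_N]) => //=; congr (_ && _).
have tP := partition_trivIset Pp.
have cP := cover_partition Pp.
apply/idP/idP.
- move=> H; apply/sepP => Y PY y0 y1.
  move/forallP: H => /(_ b0) /forallP /(_ b1) /implyP.
  have -> : (b0 < 2) && (b1 < 2) && (b0 != b1) by [].
  by rewrite (def_pblock tP PY y0) (def_pblock tP PY y1) eqxx => /(_ isT).
- move/sepP => S; apply/forallP => i; apply/forallP => j; apply/implyP.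
  move=> /andP[/andP[i2 j2] ij]; apply/negP => /eqP E.
  have Y : pblock P i \in P by apply: pblock_mem; rewrite cP inE.
  have iY : i \in pblock P i by rewrite mem_pblock cP inE.
  have jY : j \in pblock P i by rewrite E mem_pblock cP inE.
  have c2 : forall x : 'I_N, x < 2 -> x = b0 \/ x = b1.
    by case=> [[|[|x]] lx] //= _; [left|right]; apply: val_inj.
  case: (c2 _ i2) => ei; case: (c2 _ j2) => ej; subst i j => //.
  + exact: S Y iY jY.
  + exact: S Y jY iY.
Qed.
End Ord.

Section Rec.
Variable N : nat.
Hypothesis hN : 1 < N.

Lemma rst_rec k :
  rstirling2 2 N.+1 k.+1 = rstirling2 2 N k + k.+1 * rstirling2 2 N k.+1.
Proof.
have hN1 : 1 < N.+1 by apply: ltnW.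
rewrite (bridge hN1) !(bridge hN).
pose h : 'I_N -> 'I_N.+1 := widen_ord (leqnSn N).
have hinj : injective h by move=> x y /(congr1 val) /= /val_inj.
have hz : forall a, h a != ord_max.
  move=> a; apply/eqP => /(congr1 val) /= e; by move: (ltn_ord a); rewrite e ltnn.
have hsurj : forall b, b != ord_max -> exists a, b = h a.
  move=> b bn; have lt : b < N.
    move: (ltn_ord b) bn; rewrite ltnS leq_eqVlt => /orP[/eqP e|//].
    by rewrite -val_eqE /= e eqxx.
  by exists (Ordinal lt); apply: val_inj.
have -> : b0 hN1 = h (b0 hN) by apply: val_inj.
have -> : b1 hN1 = h (b1 hN) by apply: val_inj.
exact: (@SS_rec _ _ h ord_max hinj hz hsurj (b0 hN) (b1 hN) k).
Qed.
End Rec.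

Lemma rst0 N : rstirling2 2 N.+1 0 = 0.
Proof.
apply/eqP; rewrite cards_eq0; apply/eqP/setP => P; rewrite !inE.
apply/negP => /and3P[Pp /eqP c0 _].
move: c0 => /eqP; rewrite cards_eq0 => /eqP P0.
have := cover_partition Pp; rewrite P0 /cover big_set0 => /setP /(_ ord0).
by rewrite !inE.
Qed.

Lemma rst2 k : rstirling2 2 2 k = (k == 2).
Proof.
have h2 : 1 < 2 by [].
rewrite (bridge h2).
set c0 := b0 h2; set c1 := b1 h2.
have all2 : forall x : 'I_2, x = c0 \/ x = c1.
  by case=> [[|[|x]] lx] //; [left|right]; apply: val_inj.
have c01 : c0 != c1 by [].
pose P2 : {set {set 'I_2}} := [set [set c0]; [set c1]].
have P2good : P2 \in SS c0 c1 2.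
  rewrite inE; apply/and3P; split.
  - apply/partT_P; split.
    + rewrite !inE; apply/negP => /orP[] /eqP /setP E.
        by move: (E c0); rewrite !inE eqxx.
      by move: (E c1); rewrite !inE eqxx.
    + move=> x; case: (all2 x) => ->; [exists [set c0] | exists [set c1]];
        by rewrite !inE eqxx ?orbT.
    + move=> X Y x; rewrite !inE => /orP[]/eqP-> /orP[]/eqP->; rewrite !inE //.
      * by move=> /eqP-> /eqP E; rewrite E eqxx in c01.
      * by move=> /eqP-> /eqP E; rewrite E eqxx in c01.
  - rewrite cards2; suff -> : [set c0] != [set c1] by [].
    by apply/negP => /eqP /setP /(_ c0); rewrite !inE eqxx (negbTE c01).
  - apply/sepP => Y; rewrite !inE => /orP[]/eqP-> ; rewrite !inE.
      by move=> _ /eqP E; rewrite E eqxx in c01.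
    by move=> /eqP E; rewrite E eqxx in c01.
have key : forall P, P \in SS c0 c1 k -> P = P2.
  move=> P; rewrite inE => /and3P[Pp _ /sepP S].
  have [n0 cov tri] := (partT_P P).1 Pp.
  have sing : forall Y, Y \in P -> (Y == [set c0]) || (Y == [set c1]).
    move=> Y PY; have /set0Pn[y yY] : Y != set0 by apply/negP => /eqP Y0; move: n0; rewrite -Y0 PY.
    case: (all2 y) => ey; subst y.
    + apply/orP; left; apply/eqP/setP => x; rewrite inE; case: (all2 x) => ->.
        by rewrite eqxx yY.
      rewrite eq_sym (negbTE c01); apply/negP => x1; exact: S PY yY x1.
    + apply/orP; right; apply/eqP/setP => x; rewrite inE; case: (all2 x) => ->.
        rewrite (negbTE c01); apply/negP => x0; exact: S PY x0 yY.
      by rewrite eqxx yY.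
  have inP : forall c, (c = c0 \/ c = c1) -> [set c] \in P.
    move=> c hc; have [Y PY cY] := cov c.
    by case/orP: (sing Y PY) => /eqP eY; move: cY; rewrite eY inE => /eqP ec; rewrite ec -eY.
  apply/setP => W; rewrite !inE; apply/idP/idP.
  - by move=> PW; exact: sing.
  - by case/orP => /eqP ->; apply: inP; [left|right].
have -> : SS c0 c1 k = if k == 2 then [set P2] else set0.
  apply/setP => P; case: (eqVneq k 2) => [ek|nk].
    subst k; rewrite [in RHS]inE; apply/idP/idP; first by move/key ->.
    by move/eqP ->.
  rewrite in_set0; apply/negP => PS; have eP := key _ PS; move: PS; rewrite eP.
  rewrite inE => /and3P[_ /eqP e _].
  by move: P2good; rewrite inE => /and3P[_ /eqP c2 _]; rewrite -e c2 eqxx in nk.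
by case: (k == 2); rewrite ?cards1 ?cards0.
Qed.

Fixpoint t n k : nat :=
  match n with
  | 0 => (k == 2)
  | n'.+1 => if k is k'.+1 then t n' k' + k'.+1 * t n' k'.+1 else 0
  end.

Lemma rst_t n k : rstirling2 2 (n + 2) k = t n k.
Proof.
elim: n k => [|n IH] k; first by rewrite rst2.
case: k => [|k]; first by rewrite addSn rst0.
have h : 1 < n + 2 by rewrite addn2.
by rewrite addSn (rst_rec h) !IH.
Qed.

Lemma t_zero n k : n.+2 < k -> t n k = 0.
Proof.
elim: n k => [|n IH] [|k] //=; first by case: k => [|[|k]].
move=> hk; rewrite (IH k) ?(IH k.+1) ?muln0 //; exact: ltnW.
Qed.

Definition ustep (s : seq nat) : seq nat :=
  mkseq (fun k => if k is k'.+1 then (k'.+1 * (nth 0 s k' + nth 0 s k'.+1)) %% 64 else 0) 8.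
Definition u0 : seq nat := mkseq (fun k => (k == 2) * 2) 8.
Definition ust n := iter n ustep u0.

Lemma ustE n k : k < 8 -> nth 0 (ust n) k = k`! * t n k %% 64.
Proof.
elim: n k => [|n IH] k hk.
  by case: k hk => [|[|[|[|[|[|[|[|k]]]]]]]].
rewrite /ust iterS -/(ust n) /ustep nth_mkseq //.
case: k hk => [|k] hk; first by [].
rewrite !IH ?(ltnW hk) //.
rewrite -modnMmr modnDm modnMmr /=; congr (_ %% 64).
rewrite factS mulnDr !mulnA [k.+1 * k`!]mulnC mulnDr; congr (_ + _).
by rewrite mulnA; congr (_ * _); rewrite mulnC mulnA.
Qed.

Definition G (s : seq nat) :=
  (nth 0 s 2 + nth 0 s 3 + nth 0 s 4 + nth 0 s 5 + nth 0 s 6 + nth 0 s 7) %% 64.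

Lemma fact_dvd m n : m <= n -> m`! %| n`!.
Proof.
elim: n => [|n IH]; first by rewrite leqn0 => /eqP ->.
rewrite leq_eqVlt => /orP[/eqP->//|]; rewrite ltnS => /IH h.
by rewrite factS dvdn_mull.
Qed.

Lemma FG n : rfubini n 2 %% 64 = G (ust n).
Proof.
rewrite /rfubini (eq_bigr (fun k => (k + 2)`! * t n (k + 2))); last by move=> k _; rewrite rst_t.
set F := fun k => (k + 2)`! * t n (k + 2).
have E1 : \sum_(0 <= k < n.+1 + 6) F k =
          \sum_(0 <= k < n.+1) F k + \sum_(n.+1 <= k < n.+1 + 6) F k.
  exact: big_cat_nat (leq0n _) (leq_addr _ _).
have Z : \sum_(n.+1 <= k < n.+1 + 6) F k = 0.
  rewrite big_nat_cond big1 // => k /andP[/andP[lo _] _].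
  by rewrite /F t_zero ?muln0 // addn2.
rewrite Z addn0 in E1.
rewrite -E1.
have E2 : \sum_(0 <= k < n.+1 + 6) F k =
          \sum_(0 <= k < 6) F k + \sum_(6 <= k < n.+1 + 6) F k.
  exact: big_cat_nat (leq0n _) (leq_addl _ _).
rewrite E2 -modnDm [X in _ %% 64 + X](_ : _ = 0) ?addn0 ?modn_mod; last first.
  apply/eqP; change (64 %| \sum_(6 <= k < n.+1 + 6) F k); rewrite big_nat_cond; apply: dvdn_sum => k /andP[/andP[lo _] _].
  apply: dvdn_mulr; apply: dvdn_trans (fact_dvd (_ : 8 <= k + 2)); first by [].
  by rewrite addn2.
rewrite -modn_summ (@eq_big_nat _ _ _ 0 6 _ (fun k => nth 0 (ust n) (k + 2))); last first.
  by move=> k /andP[_ lk]; rewrite /F ustE // -[8]/(6 + 2) ltn_add2r.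
by rewrite !big_nat_recr //= big_geq.
Qed.

Lemma ust8 a : 5 <= a -> ust (a + 8) = ust a.
Proof.
move=> h5; rewrite /ust -(subnK h5) -addnA !iterD.
by congr iter; vm_compute.
Qed.

Lemma ust_per b q : 5 <= b -> ust (b + q * 8) = ust b.
Proof.
move=> hb; elim: q => [|q IH]; first by rewrite addn0.
by rewrite mulSn addnA addnAC ust8 // (leq_trans hb) // leq_addr.
Qed.


Lemma per_check : all (fun r => G (ust (5 + r + 2)) == G (ust (5 + r))) (iota 0 8).
Proof. by vm_compute. Qed.

Lemma small_check :
  all (fun n => all (fun m => G (ust (n + 2)) %% 2 ^ m == G (ust n) %% 2 ^ m) (iota 3 (n - 1)))
      [:: 2; 3; 4].
Proof. by vm_compute. Qed.

Unset Implicit Arguments.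
Theorem theorem4p1 (m n : nat) :
  3 <= m <= 6 -> m - 1 <= n ->
  rfubini (n + 2) 2 = rfubini n 2 %[mod 2 ^ m].
Proof.
move=> /andP[m3 m6] hn.
have d64 : 2 ^ m %| 64 by rewrite (_ : 64 = 2 ^ 6) // dvdn_exp2l.
rewrite -(modn_dvdm (rfubini (n + 2) 2) d64) -(modn_dvdm (rfubini n 2) d64) !FG.
case: (leqP 5 n) => h5.
- suff -> : G (ust (n + 2)) = G (ust n) by [].
  set r := (n - 5) %% 8.
  have r8 : r < 8 by apply: ltn_pmod.
  have en : n = (5 + r) + (n - 5) %/ 8 * 8.
    by rewrite -addnA (addnC r) -divn_eq subnKC.
  have e2 : n + 2 = (5 + r + 2) + (n - 5) %/ 8 * 8.
    by rewrite {1}en addnAC.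
  have h1 : 5 <= 5 + r + 2 by rewrite -addnA leq_addr.
  have h2 : 5 <= 5 + r := leq_addr _ _.
  rewrite e2 {2}en (ust_per _ h1) (ust_per _ h2).
  by apply/eqP; move/allP: per_check; apply; rewrite mem_iota.
- have n24 : n \in [:: 2; 3; 4].
    have n2 : 2 <= n by lia.
    by clear -n2 h5; move: n2 h5; case: n => [|[|[|[|[|n]]]]].
  move/allP: small_check => /(_ n n24) /allP /(_ m) H; apply/eqP; apply: H.
  rewrite mem_iota m3 /=. 
  lia.
Qed.
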